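(* Let $\mathbb S$ be the stack monad over a finite set $\Gamma=\{\gamma_1,\dots,\gamma_n\}$ and let $\mathbb T$ be a finitary monad on $\mathbf{Set}$. Then the tensor product $\mathbb S\otimes\mathbb T$ is isomorphic to the monad $\mathbb R$ where $RX$ consists of those $p:\Gamma^*\to T(X\times\Gamma^* )$ for which there is $m$ such that $p(su)=\big(\mathsf{do}\ \langle x,s'\rangle\leftarrow p(s);\ \eta\langle x,s'u\rangle\big)$ for all $s,u\in\Gamma^*$ with $|s|\ge m$, and whose unit and Kleisli extension are those of the store monad transform of $\mathbb T$ with store $\Gamma^*$ (i.e. $\mathbb R$ is a submonad of that transform).
   Context: The stack monad over $\Gamma$: $SX$ is the set of maps $\langle r,t\rangle:\Gamma^*\to X\times\Gamma^*$ such that for some $k$, $r(wu)=r(w)$ and $t(wu)=t(w)u$ for all $w\in\Gamma^k$, $u\in\Gamma^*$; its algebraic theory (the stack theory) has operations $pop$ of arity $n+1$ and unary $push_i$ ($1\le i\le n$) with axioms $push_i(pop(x_1,\dots,x_n,y))=x_i$, $pop(push_1(x),\dots,push_n(x),x)=x$, $pop(x_1,\dots,x_n,pop(y_1,\dots,y_n,z))=pop(x_1,\dots,x_n,z)$. For a monad $\mathbb T$ and set $S$, the store monad transform $\mathbb T_S$ has $T_SX=T(X\times S)^S$, unit $\eta(x)(s)=\eta^{\mathbb T}(x,s)$ and Kleisli extension $f^\dagger(p)(s)=\mathsf{do}\ \langle x,s'\rangle\leftarrow p(s);\ f(x)(s')$, where $\mathsf{do}\ y\leftarrow q;\ g(y)$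 denotes $g^\dagger(q)$. Finitary monads correspond to algebraic theories. The tensor product $\mathcal E_1\otimes\mathcal E_2$ of algebraic theories is the theory generated by the operations and equations of both plus, for every $f:n\to1$ of $\mathcal E_1$ and $g:m\to1$ of $\mathcal E_2$, the tensor law $f(g(x_1^1,\dots,x_m^1),\dots,g(x_1^n,\dots,x_m^n))=g(f(x_1^1,\dots,x_1^n),\dots,f(x_m^1,\dots,x_m^n))$; the tensor of finitary monads is the monad of the tensor of their theories. *)

(* Defs.v *)
From mathcomp Require Import all_boot.
From Stdlib Require Import IndefiniteDescription.
Set Implicit Arguments. Unset Strict Implicit. Unset Printing Implicit Defensive.

Definition monad_laws (T : Type -> Type) (retT : forall X, X -> T X)
    (bindT : forall X Y, (X -> T Y) -> T X -> T Y) : Prop :=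
  (forall X Y (f : X -> T Y) (x : X), bindT X Y f (retT X x) = f x) /\
  (forall X (t : T X), bindT X X (retT X) t = t) /\
  (forall X Y Z (f : X -> T Y) (g : Y -> T Z) (t : T X),
      bindT Y Z g (bindT X Y f t) = bindT X Z (fun x => bindT Y Z g (f x)) t).

(* Finitary: every element of T X lies in the image of T f for some
   f : {0..n-1} -> X (equivalently, of T of a finite subset of X). *)
Definition finitary (T : Type -> Type) (retT : forall X, X -> T X)
    (bindT : forall X Y, (X -> T Y) -> T X -> T Y) : Prop :=
  forall X (t : T X), exists n (f : 'I_n -> X) (t' : T 'I_n),
    bindT 'I_n X (fun i => retT X (f i)) t' = t.

Section Tensor.
Variable Gam : finType.
Variable T : Type -> Type.
Variable retT : forall X, X -> T X.
Variable bindT : forall X Y, (X -> T Y) -> T X -> T Y.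

(* Terms over the combined signature of the stack theory (pop of arity |Gam|+1,
   push_g unary) and the canonical theory of T (n-ary operations = T 'I_n). *)
Inductive term (X : Type) : Type :=
| Var of X
| Pop of (Gam -> term X) & term X
| Push of Gam & term X
| Op (n : nat) of T 'I_n & ('I_n -> term X).

Arguments Var {X}. Arguments Pop {X}. Arguments Push {X}. Arguments Op {X n}.

Fixpoint subst X Y (f : X -> term Y) (t : term X) : term Y :=
  match t with
  | Var x => f x
  | Pop xs z => Pop (fun g => subst f (xs g)) (subst f z)
  | Push g z => Push g (subst f z)
  | Op n o ts => Op o (fun i => subst f (ts i))
  end.

Fixpoint stack_only X (t : term X) : Prop :=
  match t with
  | Var _ => True
  | Pop xs z => (forall g, stack_only (xs g)) /\ stack_only z
  | Push _ z => stack_only z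
  | Op _ _ _ => False
  end.

Fixpoint T_only X (t : term X) : Prop :=
  match t with
  | Var _ => True
  | Pop _ _ => False
  | Push _ _ => False
  | Op _ _ ts => forall i, T_only (ts i)
  end.

(* Derivable equality in the tensor theory (stack theory) (x) (theory of T):
   least congruence containing all substitution instances of the axioms. *)
Inductive eqv (X : Type) : term X -> term X -> Prop :=
| eqv_refl t : eqv t t
| eqv_sym t u : eqv t u -> eqv u t
| eqv_trans t u v : eqv t u -> eqv u v -> eqv t v
| eqv_Pop xs ys z z' :
    (forall g, eqv (xs g) (ys g)) -> eqv z z' -> eqv (Pop xs z) (Pop ys z')
| eqv_Push g z z' : eqv z z' -> eqv (Push g z) (Push g z')
| eqv_Op n (o : T 'I_n) ts us :
    (forall i, eqv (ts i) (us i)) -> eqv (Op o ts) (Op o us)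
| ax_push_pop g xs y : eqv (Push g (Pop xs y)) (xs g)
| ax_pop_push x : eqv (Pop (fun g => Push g x) x) x
| ax_pop_pop xs ys z : eqv (Pop xs (Pop ys z)) (Pop xs z)
| ax_T_unit n (i : 'I_n) (ts : 'I_n -> term X) :
    eqv (Op (retT i) ts) (ts i)
| ax_T_mult n m (o : T 'I_n) (s : 'I_n -> T 'I_m) (ts : 'I_m -> term X) :
    eqv (Op o (fun i => Op (s i) ts)) (Op (bindT s o) ts)
| ax_tensor n m (f : term 'I_n) (g : term 'I_m) (x : 'I_n -> 'I_m -> term X) :
    stack_only f -> T_only g ->
    eqv (subst (fun i => subst (fun j => x i j) g) f)
        (subst (fun j => subst (fun i => x i j) f) g).

(* The tensor monad S (x) T: free algebras = terms modulo eqv. *)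
Definition tens (X : Type) : Type := {P : term X -> Prop | exists t, P = eqv t}.

Definition cls X (t : term X) : tens X :=
  exist (fun P => exists t0, P = eqv t0) (eqv t) (ex_intro _ t erefl).

Definition rep X (q : tens X) : term X :=
  proj1_sig (constructive_indefinite_description _ (proj2_sig q)).

Definition tens_ret X (x : X) : tens X := cls (Var x).

Definition tens_bind X Y (f : X -> tens Y) (q : tens X) : tens Y :=
  cls (subst (fun x => rep (f x)) (rep q)).

Definition stT (X : Type) : Type := seq Gam -> T (X * seq Gam).

Definition st_ret X (x : X) : stT X := fun s => retT (x, s).

Definition st_bind X Y (f : X -> stT Y) (p : stT X) : stT Y :=
  fun s => bindT (fun xs : X * seq Gam => f xs.1 xs.2) (p s).

Definition inR X (p : stT X) : Prop :=
  exists m, forall s u : seq Gam, m <= size s ->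
    p (s ++ u) = bindT (fun xs : X * seq Gam => retT (xs.1, xs.2 ++ u)) (p s).

End Tensor.

(* Main.v *)
Require Import Defs.
From mathcomp Require Import all_boot.
From Stdlib Require Import IndefiniteDescription FunctionalExtensionality
  PropExtensionality ProofIrrelevance ClassicalDescription.

Set Implicit Arguments. Unset Strict Implicit. Unset Printing Implicit Defensive.

Section Main.
Variable Gam : finType.
Variable T : Type -> Type.
Variable retT : forall X, X -> T X.
Variable bindT : forall X Y, (X -> T Y) -> T X -> T Y.
Hypothesis HT : monad_laws retT bindT.
Hypothesis Hfin : finitary retT bindT.

Notation tm := (term Gam T).
Notation eqv := (@eqv Gam T retT bindT _).
Notation stT := (@stT Gam T).

Lemma bind_ret X Y (f : X -> T Y) x : bindT f (retT x) = f x.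
Proof. by case: HT => H _; apply: H. Qed.
Lemma ret_bind X (t : T X) : bindT (@retT X) t = t.
Proof. by case: HT => _ [H _]; apply: H. Qed.
Lemma bind_assoc X Y Z (f : X -> T Y) (g : Y -> T Z) t :
  bindT g (bindT f t) = bindT (fun x => bindT g (f x)) t.
Proof. by case: HT => _ [_ H]; apply: H. Qed.

Fixpoint ienv V X (rho : V -> stT X) (t : tm V) : stT X :=
  match t with
  | Var v => rho v
  | Pop xs z => fun s => match s with
                         | [::] => ienv rho z [::]
                         | g :: s' => ienv rho (xs g) s' end
  | Push g z => fun s => ienv rho z (g :: s)
  | Op _ o ts => fun s => bindT (fun i => ienv rho (ts i) s) o
  end.

Definition interp X (t : tm X) : stT X := ienv (@st_ret Gam T retT X) t.

Lemma ienv_subst V W X (rho : W -> stT X) (sg : V -> tm W) (t : tm V) :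
  ienv rho (subst sg t) = ienv (fun v => ienv rho (sg v)) t.
Proof.
elim: t => [v|xs IH z IHz|g z IHz|n o ts IH] //=.
- apply: functional_extensionality => -[|g s] //=; by rewrite ?IH ?IHz.
- by rewrite IHz.
- apply: functional_extensionality => s; f_equal.
  apply: functional_extensionality => i; by rewrite IH.
Qed.

Fixpoint run V (t : tm V) (s : seq Gam) : option (V * seq Gam) :=
  match t with
  | Var v => Some (v, s)
  | Pop xs z => match s with [::] => run z [::] | g :: s' => run (xs g) s' end
  | Push g z => run z (g :: s)
  | Op _ _ _ => None
  end.

Lemma run_spec V (f : tm V) : stack_only f -> forall s X (rho : V -> stT X),
  match run f s with Some (v, s') => ienv rho f s = rho v s' | None => False end.
Proof.
elim: f => [v|xs IH z IHz|g z IHz|n o ts IH] //=.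
- move=> [H1 H2] [|g s] X rho /=; [exact: IHz|exact: IH].
- move=> H s X rho; exact: IHz.
Qed.

Lemma tonly_spec V (g : tm V) : T_only g -> exists c : T V,
  forall X (rho : V -> stT X) s, ienv rho g s = bindT (fun v => rho v s) c.
Proof.
elim: g => [v|xs IH z IHz|g z IHz|n o ts IH] //=.
- move=> _; exists (retT v) => X rho s; by rewrite bind_ret.
- move=> H.
  have H' : forall i, {c : T V | forall X (rho : V -> stT X) s,
      ienv rho (ts i) s = bindT (fun v => rho v s) c}.
    move=> i; apply: constructive_indefinite_description; exact: IH.
  exists (bindT (fun i => proj1_sig (H' i)) o) => X rho s.
  rewrite bind_assoc; f_equal; apply: functional_extensionality => i.
  exact: (proj2_sig (H' i)).
Qed.

Lemma sound X (t u : tm X) : eqv t u -> forall Y (rho : X -> stT Y), ienv rho t = ienv rho u.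
Proof.
move=> H; induction H; move=> Y rho; simpl.
- by [].
- by rewrite IHeqv.
- by rewrite IHeqv1 IHeqv2.
- apply: functional_extensionality => -[|g s] /=.
    by rewrite IHeqv.
  by rewrite H0.
- by rewrite IHeqv.
- apply: functional_extensionality => s; f_equal.
  apply: functional_extensionality => i; by rewrite H0.
- by [].
- by apply: functional_extensionality => -[|g s].
- by apply: functional_extensionality => -[|g s].
- apply: functional_extensionality => s; by rewrite bind_ret.
- apply: functional_extensionality => st; by rewrite bind_assoc.
- rewrite !ienv_subst.
  have [c Hc] := tonly_spec H0.
  apply: functional_extensionality => s.
  have Hr := run_spec H s.
  rewrite Hc.
  case E: (run f s) Hr => [[v s']|] Hr; last by case: (Hr _ (fun _ => fun _ => retT (tt, [::]))).
  rewrite Hr ienv_subst Hc; f_equal; apply: functional_extensionality => j.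
  by rewrite ienv_subst Hr.
Qed.

Lemma mult_ax X n m (o : T 'I_n) (s : 'I_n -> T 'I_m) (ts : 'I_m -> tm X) :
  eqv (Op o (fun i => Op (s i) ts)) (Op (bindT s o) ts).
Proof. exact: ax_T_mult. Qed.
Lemma unit_ax X n (i : 'I_n) (ts : 'I_n -> tm X) : eqv (Op (retT i) ts) (ts i).
Proof. exact: ax_T_unit. Qed.

Definition Tmap A B (f : A -> B) (t : T A) : T B := bindT (fun a => retT (f a)) t.

Lemma TmapK A B C (f : A -> B) (g : B -> C) t : Tmap g (Tmap f t) = Tmap (fun a => g (f a)) t.
Proof.
rewrite /Tmap bind_assoc; f_equal; apply: functional_extensionality => a.
by rewrite bind_ret.
Qed.

Lemma reindex X a b (h : 'I_a -> 'I_b) (t : T 'I_a) (W : 'I_b -> tm X) :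
  eqv (Op t (fun i => W (h i))) (Op (Tmap h t) W).
Proof.
apply: eqv_trans (mult_ax _ _ _).
apply: eqv_Op => i; apply: eqv_sym; exact: unit_ax.
Qed.

Lemma collapse X Y N (L : 'I_N -> Y) (dflt : T 'I_N) (w : Y -> tm X) :
  exists rk : Y -> T 'I_N, forall o : T 'I_N,
    eqv (Op o (fun i => w (L i))) (Op (bindT rk (Tmap L o)) (fun i => w (L i))).
Proof.
pose rk y := match excluded_middle_informative (exists i, L i = y) with
   | left H => retT (proj1_sig (constructive_indefinite_description _ H))
   | right _ => dflt end.
exists rk => o.
have Hq : forall i, exists j, rk (L i) = retT j /\ L j = L i.
  move=> i; rewrite /rk; case: excluded_middle_informative => [H|H]; last first.
    by case: H; exists i.
  exists (proj1_sig (constructive_indefinite_description _ H)); split => //.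
  exact: (proj2_sig (constructive_indefinite_description _ H)).
pose q i := proj1_sig (constructive_indefinite_description _ (Hq i)).
have Hq1 i : rk (L i) = retT (q i).
  by case: (proj2_sig (constructive_indefinite_description _ (Hq i))).
have Hq2 i : L (q i) = L i.
  by case: (proj2_sig (constructive_indefinite_description _ (Hq i))).
have -> : bindT rk (Tmap L o) = Tmap q o.
  rewrite /Tmap bind_assoc; f_equal; apply: functional_extensionality => i.
  by rewrite bind_ret Hq1.
have E : (fun i => w (L i)) = (fun i => (fun j => w (L j)) (q i)).
  by apply: functional_extensionality => i; rewrite Hq2.
rewrite {1}E; exact: reindex.
Qed.

Lemma LU X Y (w : Y -> tm X) k1 (f1 : 'I_k1 -> Y) t1 k2 (f2 : 'I_k2 -> Y) t2 :
  Tmap f1 t1 = Tmap f2 t2 -> eqv (Op t1 (fun i => w (f1 i))) (Op t2 (fun i => w (f2 i))).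
Proof.
move=> Heq.
pose L (r : 'I_#|{: 'I_k1 + 'I_k2}|) :=
  match enum_val r with inl a => f1 a | inr b => f2 b end.
pose e1 (a : 'I_k1) := enum_rank (inl a : ('I_k1 + 'I_k2)%type).
pose e2 (b : 'I_k2) := enum_rank (inr b : ('I_k1 + 'I_k2)%type).
have He1 a : L (e1 a) = f1 a by rewrite /L /e1 enum_rankK.
have He2 b : L (e2 b) = f2 b by rewrite /L /e2 enum_rankK.
have [rk Hrk] := collapse L (Tmap e1 t1) w.
have E1 : eqv (Op t1 (fun i => w (f1 i))) (Op (bindT rk (Tmap f1 t1)) (fun i => w (L i))).
  have -> : (fun i => w (f1 i)) = (fun i => (fun j => w (L j)) (e1 i)).
    by apply: functional_extensionality => i; rewrite He1.
  eapply eqv_trans; first exact: (reindex e1 t1 (fun j => w (L j))).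
  eapply eqv_trans; first exact: Hrk.
  rewrite TmapK.
  have -> : (fun a => L (e1 a)) = f1 by apply: functional_extensionality.
  exact: eqv_refl.
have E2 : eqv (Op t2 (fun i => w (f2 i))) (Op (bindT rk (Tmap f2 t2)) (fun i => w (L i))).
  have -> : (fun i => w (f2 i)) = (fun i => (fun j => w (L j)) (e2 i)).
    by apply: functional_extensionality => i; rewrite He2.
  eapply eqv_trans; first exact: (reindex e2 t2 (fun j => w (L j))).
  eapply eqv_trans; first exact: Hrk.
  rewrite TmapK.
  have -> : (fun a => L (e2 a)) = f2 by apply: functional_extensionality.
  exact: eqv_refl.
apply: eqv_trans E1 _; rewrite Heq; exact: eqv_sym.
Qed.

Lemma comb X Y (w : Y -> tm X) n (o : T 'I_n) (k : 'I_n -> nat)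
  (ts : forall i, T 'I_(k i)) (fs : forall i, 'I_(k i) -> Y) :
  exists N (F : 'I_N -> Y) (t : T 'I_N),
    Tmap F t = bindT (fun i => Tmap (fs i) (ts i)) o /\
    eqv (Op o (fun i => Op (ts i) (fun j => w (fs i j)))) (Op t (fun r => w (F r))).
Proof.
pose F (r : 'I_#|{: {i : 'I_n & 'I_(k i)}}|) := let s := enum_val r in fs (tag s) (tagged s).
pose e i (j : 'I_(k i)) := enum_rank (existT _ i j : {i : 'I_n & 'I_(k i)}).
have He i j : F (e i j) = fs i j by rewrite /F /e enum_rankK.
exists _, F, (bindT (fun i => Tmap (e i) (ts i)) o); split.
  rewrite {1}/Tmap bind_assoc; f_equal; apply: functional_extensionality => i.
  have -> : bindT (fun a => retT (F a)) (Tmap (e i) (ts i)) = Tmap F (Tmap (e i) (ts i)) by [].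
  rewrite TmapK; congr Tmap.
  by apply: functional_extensionality => j; rewrite He.
apply: eqv_trans (mult_ax _ _ _).
apply: eqv_Op => i.
have -> : (fun j => w (fs i j)) = (fun j => (fun r => w (F r)) (e i j)).
  by apply: functional_extensionality => j; rewrite He.
exact: reindex.
Qed.

Lemma tensor_push X g n (o : T 'I_n) (W : 'I_n -> tm X) :
  eqv (Push g (Op o W)) (Op o (fun i => Push g (W i))).
Proof.
have H := @ax_tensor Gam T retT bindT X 1 n (Push g (Var Gam T ord0))
  (Op o (fun i => Var Gam T i)) (fun _ j => W j) I (fun _ => I).
exact: H.
Qed.

Lemma tensor_pop X n (o : T 'I_n) (A : 'I_n -> Gam -> tm X) (B : 'I_n -> tm X) :
  eqv (Op o (fun i => Pop (A i) (B i))) (Pop (fun g => Op o (fun i => A i g)) (Op o B)).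
Proof.
pose x (v : 'I_#|Gam|.+1) (i : 'I_n) :=
  match unlift ord0 v with Some r => A i (enum_val r) | None => B i end.
have H := @ax_tensor Gam T retT bindT X _ n
  (Pop (fun g => Var Gam T (lift ord0 (enum_rank g))) (Var Gam T ord0))
  (Op o (fun i => Var Gam T i)) x (conj (fun _ => I) I) (fun _ => I).
simpl in H.
have Ex g i : x (lift ord0 (enum_rank g)) i = A i g by rewrite /x liftK enum_rankK.
have Ex0 i : x ord0 i = B i by rewrite /x unlift_none.
have E1 : (fun g => Op o (fun i => x (lift ord0 (enum_rank g)) i)) = (fun g => Op o (fun i => A i g)).
  apply: functional_extensionality => g; f_equal; apply: functional_extensionality => i; exact: Ex.
have E2 : (fun i => x ord0 i) = B by apply: functional_extensionality => i; exact: Ex0.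
have E3 : (fun i => Pop (fun g => x (lift ord0 (enum_rank g)) i) (x ord0 i)) = (fun i => Pop (A i) (B i)).
  apply: functional_extensionality => i; rewrite Ex0; f_equal; apply: functional_extensionality => g; exact: Ex.
rewrite E1 E2 E3 in H; exact: eqv_sym.
Qed.

Definition decn Y (y : T Y) : nat := proj1_sig (constructive_indefinite_description _ (Hfin y)).
Lemma decn_spec Y (y : T Y) : exists (f : 'I_(decn y) -> Y) (t' : T 'I_(decn y)),
    bindT (fun i => retT (f i)) t' = y.
Proof. exact: (proj2_sig (constructive_indefinite_description _ (Hfin y))). Qed.
Definition decf Y (y : T Y) : 'I_(decn y) -> Y :=
  proj1_sig (constructive_indefinite_description _ (@decn_spec _ y)).
Definition dect Y (y : T Y) : T 'I_(decn y) :=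
  proj1_sig (constructive_indefinite_description _
    (proj2_sig (constructive_indefinite_description _ (@decn_spec _ y)))).
Arguments decf {Y} y _. Arguments dect {Y} y. Arguments decn {Y} y.
Lemma dec_spec Y (y : T Y) : Tmap (decf y) (dect y) = y.
Proof.
exact: (proj2_sig (constructive_indefinite_description _
    (proj2_sig (constructive_indefinite_description _ (@decn_spec _ y))))).
Qed.

Fixpoint pushes X (l : seq Gam) (z : tm X) : tm X :=
  match l with [::] => z | g :: l' => pushes l' (Push g z) end.
Definition wf X (xl : X * seq Gam) : tm X := pushes xl.2 (Var Gam T xl.1).
Definition leafOf X (y : T (X * seq Gam)) : tm X := Op (dect y) (fun i => wf (decf y i)).
Fixpoint read X (p : stT X) (k : nat) (acc : seq Gam) : tm X :=
  match k with
  | 0 => leafOf (p acc)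
  | k'.+1 => Pop (fun g => read p k' (rcons acc g)) (leafOf (p acc))
  end.

Lemma pushes_rcons X l g (z : tm X) : pushes (rcons l g) z = Push g (pushes l z).
Proof. by elim: l z => [|h l IH] z //=; rewrite IH. Qed.

Lemma ienv_pushes V X (rho : V -> stT X) l z u : ienv rho (pushes l z) u = ienv rho z (l ++ u).
Proof. by elim: l z u => [|h l IH] z u //=; rewrite IH. Qed.

Lemma read_shift X (p : stT X) k g acc : read p k (g :: acc) = read (fun s => p (g :: s)) k acc.
Proof.
elim: k acc => [|k IH] acc //=; congr Pop.
by apply: functional_extensionality => h; rewrite IH.
Qed.

Lemma leaf_var X (x : X) acc : eqv (leafOf (retT (x, acc))) (pushes acc (Var Gam T x)).
Proof.
eapply eqv_trans; last exact: (unit_ax (@ord0 0) (fun _ => wf (x, acc))).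
apply: (@LU X _ (@wf X)).
rewrite dec_spec /Tmap bind_ret //.
Qed.

Lemma read_var X (x : X) k acc : eqv (read (interp (Var Gam T x)) k acc) (pushes acc (Var Gam T x)).
Proof.
elim: k acc => [|k IH] acc /=; first exact: leaf_var.
eapply eqv_trans; last exact: ax_pop_push.
apply: eqv_Pop => [g|]; last exact: leaf_var.
rewrite -pushes_rcons; exact: IH.
Qed.

Lemma leaf_op X n (o : T 'I_n) (ps : 'I_n -> stT X) acc :
  eqv (Op o (fun i => leafOf (ps i acc))) (leafOf (bindT (fun i => ps i acc) o)).
Proof.
have [N [F [t [H1 H2]]]] := comb (@wf X) o (fun i => dect (ps i acc)) (fun i => decf (ps i acc)).
apply: eqv_trans H2 _.
apply: (@LU X _ (@wf X)).
rewrite H1 dec_spec; f_equal; apply: functional_extensionality => i; exact: dec_spec.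
Qed.

Lemma read_op X n (o : T 'I_n) (ps : 'I_n -> stT X) k acc :
  eqv (Op o (fun i => read (ps i) k acc)) (read (fun s => bindT (fun i => ps i s) o) k acc).
Proof.
elim: k acc => [|k IH] acc /=; first exact: leaf_op.
eapply eqv_trans; first exact: tensor_pop.
apply: eqv_Pop => [g|]; [exact: IH|exact: leaf_op].
Qed.

Lemma pop_read X (A : Gam -> tm X) p k acc :
  eqv (Pop A (read p k acc)) (Pop A (leafOf (p acc))).
Proof. case: k => [|k] /=; [exact: eqv_refl|exact: ax_pop_pop]. Qed.

Lemma fin_bound (I : finType) (P : I -> nat -> Prop) :
  (forall i, exists M, forall m, M <= m -> P i m) -> exists M, forall i m, M <= m -> P i m.
Proof.
move=> H.
pose Mf i := proj1_sig (constructive_indefinite_description _ (H i)).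
exists (\max_i Mf i) => i m Hm.
apply: (proj2_sig (constructive_indefinite_description _ (H i))).
exact: leq_trans (leq_bigmax i) Hm.
Qed.

Lemma norm X (t : tm X) : exists M, forall m, M <= m -> eqv t (read (interp t) m [::]).
Proof.
elim: t => [x|xs IH z IHz|g z IHz|n o ts IH].
- exists 0 => m _; apply: eqv_sym; exact: read_var.
- have [B HB] := fin_bound (P := fun g m => eqv (xs g) (read (interp (xs g)) m [::])) IH.
  have [Mz HMz] := IHz.
  exists (maxn B Mz).+1 => -[//|m] Hm.
  have HmB : B <= m by move: Hm; rewrite ltnS; apply: leq_trans; exact: leq_maxl.
  have HmZ : Mz <= m by move: Hm; rewrite ltnS; apply: leq_trans; exact: leq_maxr.
  rewrite /=.
  have -> : (fun g => read (interp (Pop xs z)) m (rcons [::] g)) = (fun g => read (interp (xs g)) m [::]).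
    by apply: functional_extensionality => g; rewrite /= read_shift.
  eapply eqv_trans; last exact: (pop_read _ (interp z) m [::]).
  apply: eqv_Pop => [g|]; [exact: HB|exact: HMz].
- have [Mz HMz] := IHz.
  exists Mz => m Hm.
  apply: eqv_trans (eqv_Push g (HMz m.+1 (leqW Hm))) _.
  rewrite /=. eapply eqv_trans; first exact: ax_push_pop.
  rewrite read_shift; exact: eqv_refl.
- have [B HB] := fin_bound (P := fun i m => eqv (ts i) (read (interp (ts i)) m [::])) IH.
  exists B => m Hm.
  apply: eqv_trans (eqv_Op o (fun i => HB i m Hm)) _.
  exact: read_op.
Qed.

Lemma interp_leaf X (y : T (X * seq Gam)) u :
  interp (leafOf y) u = bindT (fun xs : X * seq Gam => retT (xs.1, xs.2 ++ u)) y.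
Proof.
transitivity (bindT (fun xs : X * seq Gam => retT (xs.1, xs.2 ++ u)) (Tmap (decf y) (dect y)));
  last by rewrite dec_spec.
rewrite /leafOf /interp /= /Tmap bind_assoc.
f_equal; apply: functional_extensionality => i.
by rewrite bind_ret /wf ienv_pushes.
Qed.

Lemma read_interp X (p : stT X) m :
  (forall s u, m <= size s -> p (s ++ u) = bindT (fun xs : X * seq Gam => retT (xs.1, xs.2 ++ u)) (p s)) ->
  forall k acc w, m <= size acc + k -> interp (read p k acc) w = p (acc ++ w).
Proof.
move=> Hp; elim => [|k IH] acc w Hm.
  change (interp (leafOf (p acc)) w = p (acc ++ w)).
  by rewrite interp_leaf Hp // -(addn0 (size acc)).
case: w => [|g w].
  change (interp (leafOf (p acc)) [::] = p (acc ++ [::])).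
  rewrite interp_leaf cats0.
  have -> : (fun xs : X * seq Gam => retT (xs.1, xs.2 ++ [::])) = @retT _.
    by apply: functional_extensionality => -[x l]; rewrite cats0.
  exact: ret_bind.
change (interp (read p k (rcons acc g)) w = p (acc ++ g :: w)).
rewrite IH; first by rewrite cat_rcons.
by rewrite size_rcons addSnnS.
Qed.

Definition Rprop X (p : stT X) m := forall s u, m <= size s ->
  p (s ++ u) = bindT (fun xs : X * seq Gam => retT (xs.1, xs.2 ++ u)) (p s).

Lemma Rprop_mono X (p : stT X) : (exists m, Rprop p m) -> exists M, forall m, M <= m -> Rprop p m.
Proof.
move=> [m0 H]; exists m0 => m Hm s u Hs; apply: H; exact: leq_trans Hm Hs.
Qed.

Lemma R_interp X (t : tm X) : exists m, Rprop (interp t) m.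
Proof.
elim: t => [x|xs IH z IHz|g z IHz|n o ts IH].
- by exists 0 => s u _; rewrite /interp /= /st_ret bind_ret.
- have [B HB] := fin_bound (P := fun g m => Rprop (interp (xs g)) m)
    (fun g => Rprop_mono (IH g)).
  exists B.+1 => -[//|g s] u Hs /=.
  exact: (HB g B (leqnn _)).
- have [m Hm] := IHz; exists m => s u Hs /=.
  exact: (Hm (g :: s) u (leqW Hs)).
- have [B HB] := fin_bound (P := fun i m => Rprop (interp (ts i)) m)
    (fun i => Rprop_mono (IH i)).
  exists B => s u Hs; rewrite /interp /= bind_assoc; f_equal.
  apply: functional_extensionality => i; exact: (HB i B (leqnn _)).
Qed.

Lemma ienv_st X Y (rho : X -> stT Y) (t : tm X) : ienv rho t = st_bind bindT rho (interp t).
Proof.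
rewrite /st_bind; elim: t => [x|xs IH z IHz|g z IHz|n o ts IH] /=.
- by apply: functional_extensionality => s; rewrite /interp /= /st_ret bind_ret.
- apply: functional_extensionality => -[|g s] /=; by rewrite ?IH ?IHz.
- by apply: functional_extensionality => s; rewrite IHz.
- apply: functional_extensionality => s; rewrite /interp /= bind_assoc; f_equal.
  apply: functional_extensionality => i; by rewrite IH.
Qed.

End Main.

Section Tens.
Variable Gam : finType.
Variable T : Type -> Type.
Variable retT : forall X, X -> T X.
Variable bindT : forall X Y, (X -> T Y) -> T X -> T Y.

Lemma rep_spec X (q : tens Gam retT bindT X) : proj1_sig q = eqv retT bindT (rep q).
Proof. exact: (proj2_sig (constructive_indefinite_description _ (proj2_sig q))). Qed.

Lemma rep_cls X (t : term Gam T X) : eqv retT bindT (rep (cls retT bindT t)) t.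
Proof.
have H := rep_spec (cls retT bindT t).
apply: eqv_sym; rewrite /= in H; rewrite H; exact: eqv_refl.
Qed.

Lemma eqv_ext X (a b : term Gam T X) : eqv retT bindT a b -> eqv retT bindT a = eqv retT bindT b.
Proof.
move=> H; apply: functional_extensionality => c; apply: propositional_extensionality; split => H'.
  exact: eqv_trans (eqv_sym H) H'.
exact: eqv_trans H H'.
Qed.

Lemma tens_eq X (q1 q2 : tens Gam retT bindT X) :
  eqv retT bindT (rep q1) (rep q2) -> q1 = q2.
Proof.
move=> H; have E := eqv_ext H.
have E1 := rep_spec q1; have E2 := rep_spec q2.
move: E1 E2 E; clear H; case: q1 => P1 H1; case: q2 => P2 H2 /= E1 E2 E.
have EP : P1 = P2 by rewrite E1 E2 E.
subst P2; f_equal; apply: proof_irrelevance.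
Qed.
End Tens.

Theorem mainTheorem6 (Gam : finType) (T : Type -> Type)
    (retT : forall X, X -> T X) (bindT : forall X Y, (X -> T Y) -> T X -> T Y)
    (HT : monad_laws retT bindT) (Hfin : finitary retT bindT) :
  exists phi : forall X : Type, @tens Gam T retT bindT X -> @stT Gam T X,
    (forall X, injective (phi X)) /\
    (forall X (p : @stT Gam T X), @inR Gam T retT bindT X p <-> exists q, phi X q = p) /\
    (forall X (x : X), phi X (@tens_ret Gam T retT bindT X x) = @st_ret Gam T retT X x) /\
    (forall X Y (f : X -> @tens Gam T retT bindT Y) (q : @tens Gam T retT bindT X),
        phi Y (@tens_bind Gam T retT bindT X Y f q)
        = @st_bind Gam T bindT X Y (fun x => phi Y (f x)) (phi X q)).
Proof.
have Hcls : forall X (t : term Gam T X), interp retT bindT (rep (cls retT bindT t)) = interp retT bindT t.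
  move=> X t; rewrite /interp; exact: (sound HT (rep_cls retT bindT t)).
exists (fun X q => interp retT bindT (rep q)); split; [|split; [|split]].
- move=> X q1 q2 E; apply: tens_eq.
  have [M1 H1] := norm HT Hfin (rep q1).
  have [M2 H2] := norm HT Hfin (rep q2).
  have HA := H1 (maxn M1 M2) (leq_maxl _ _).
  have HB := H2 (maxn M1 M2) (leq_maxr _ _).
  rewrite /= in E; rewrite E in HA.
  exact: eqv_trans HA (eqv_sym HB).
- move=> X p; split.
  + move=> [m Hm]; exists (cls retT bindT (read Hfin p m [::])).
    rewrite /= Hcls; apply: functional_extensionality => w.
    rewrite (read_interp HT Hfin Hm) //.
  + move=> [q <-]; have [m Hm] := R_interp HT (rep q); exists m; exact: Hm.
- move=> X x; rewrite /tens_ret /= Hcls //.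
- move=> X Y f q; rewrite /tens_bind /= Hcls /interp ienv_subst.
  exact: ienv_st.
Qed.
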